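(* Let $\Phi=(A;A^*;\{E_i\}_{i=0}^d;\{E^*_i\}_{i=0}^d)$ be a Leonard system in $\mathcal A$ with eigenvalue sequence $\theta_0,\dots,\theta_d$, dual eigenvalue sequence $\theta^*_0,\dots,\theta^*_d$, first split sequence $\varphi_1,\dots,\varphi_d$ and second split sequence $\phi_1,\dots,\phi_d$, and let $k_i=\nu\,\mathrm{tr}(E^*_iE_0)$. Then $$k_i=\frac{\varphi_1\varphi_2\cdots\varphi_i}{\phi_1\phi_2\cdots\phi_i}\cdot\frac{\eta^*_d(\theta^*_0)}{\tau^*_i(\theta^*_i)\,\eta^*_{d-i}(\theta^*_i)}\qquad(0\le i\le d).$$
   Context: Let $\mathbb K$ be a field, $d\ge 0$ an integer, and $\mathcal A$ a $\mathbb K$-algebra isomorphic to the full matrix algebra $\mathrm{Mat}_{d+1}(\mathbb K)$; $I$ is its identity. An element of $\mathcal A$ is multiplicity-free if it has $d+1$ mutually distinct eigenvalues in $\mathbb K$. If $A$ is multiplicity-free with eigenvalues $\theta_0,\dots,\theta_d$, the primitive idempotent of $A$ associated with $\theta_i$ is $E_i=\prod_{j\ne i}(A-\theta_jI)/(\theta_i-\theta_j)$. A Leonard system in $\mathcal A$ is a sequence $\Phi=(A;A^*;\{E_i\}_{i=0}^d;\{E^*_i\}_{i=0}^d)$ such that (i) $A,A^*\in\mathcal A$ are multiplicity-free; (ii) $E_0,\dots,E_d$ is an ordering of the primitive idempotents of $A$; (iii) $E^*_0,\dots,E^*_d$ is an ordering of the primitive idempotents of $A^*$; (iv) $E_iA^*E_j=0$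 if $|i-j|>1$ and $E_iA^*E_j\ne0$ if $|i-j|=1$ ($0\le i,j\le d$); (v) $E^*_iAE^*_j=0$ if $|i-j|>1$ and $E^*_iAE^*_j\ne0$ if $|i-j|=1$ ($0\le i,j\le d$). Here $A^*$ is merely notation (not an adjoint). $\theta_i$ (resp. $\theta^*_i$) is the eigenvalue of $A$ (resp. $A^*$) associated with $E_i$ (resp. $E^*_i$). The scalar $\mathrm{tr}(E_0E^*_0)$ is nonzero and $\nu$ is its inverse. First split sequence of a Leonard system $\Psi=(B;B^*;\{F_i\};\{F^*_i\})$ with eigenvalues $\sigma_i$ (for $F_i$) and dual eigenvalues $\sigma^*_i$ (for $F^*_i$): on an irreducible module $V$, $U_i=(F^*_0V+\cdots+F^*_iV)\cap(F_iV+\cdots+F_dV)$ is $1$-dimensional and, for $1\le i\le d$, an eigenspace of $(B-\sigma_{i-1}I)(B^*-\sigma^*_iI)$ with nonzero eigenvalue, denoted $\varphi_i(\Psi)$. The first split sequence of $\Phi$ is $\varphi_i=\varphi_i(\Phi)$; the second split sequence is $\phi_i=\varphi_i(\Phi^{\Downarrow})$, where $\Phi^{\Downarrow}=(A;A^*;\{E_{d-i}\}_{i=0}^d;\{E^*_i\}_{i=0}^d)$ (also a Leonard system). Polynomials: $\tau^*_i=\prod_{h=0}^{i-1}(\lambda-\theta^*_h)$, $\eta^*_i=\prod_{h=0}^{i-1}(\lambda-\theta^*_{d-h})$ (empty products $=1$). *)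

(* Defs.v *)
From HB Require Import structures.
From mathcomp Require Import all_boot all_order all_algebra.
Set Implicit Arguments. Unset Strict Implicit. Unset Printing Implicit Defensive.
Import GRing.Theory.
Local Open Scope ring_scope.

(* The algebra is modelled by 'M[K]_(d.+1) itself (A is isomorphic to it;
   all notions below are invariant under algebra isomorphism).
   Sequences indexed by 0..d are functions nat -> K (values beyond d unused). *)

Section Leonard.
Variables (K : fieldType) (d : nat).
Local Notation M := 'M[K]_(d.+1).

Definition prim_idem (A : M) (th : nat -> K) (i : nat) : M :=
  \prod_(j < d.+1 | (j : nat) != i) ((th i - th j)^-1 *: (A - (th j)%:M)).

Definition eig_ordering (A : M) (th : nat -> K) : Prop :=
  (forall i j, (i <= d)%N -> (j <= d)%N -> th i = th j -> i = j) /\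
  (forall i, (i <= d)%N -> eigenvalue A (th i)).

Definition leonard_system (A As : M) (th ths : nat -> K) : Prop :=
  [/\ eig_ordering A th /\ eig_ordering As ths,
      (forall i j, (i <= d)%N -> (j <= d)%N ->
         ((j.+1 < i)%N || (i.+1 < j)%N) ->
         prim_idem A th i *m As *m prim_idem A th j = 0),
      (forall i j, (i <= d)%N -> (j <= d)%N ->
         ((j.+1 == i) || (i.+1 == j)) ->
         prim_idem A th i *m As *m prim_idem A th j != 0),
      (forall i j, (i <= d)%N -> (j <= d)%N ->
         ((j.+1 < i)%N || (i.+1 < j)%N) ->
         prim_idem As ths i *m A *m prim_idem As ths j = 0) &
      (forall i j, (i <= d)%N -> (j <= d)%N ->
         ((j.+1 == i) || (i.+1 == j)) ->
         prim_idem As ths i *m A *m prim_idem As ths j != 0)].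

(* V = K^(d+1) as column vectors; a column vector v is encoded by the row
   vector v^T, so the column space X V of a matrix X is the row space of X^T,
   and X v corresponds to v^T *m X^T. *)
Definition split_U (B Bs : M) (sg sgs : nat -> K) (i : nat) : 'M[K]_(d.+1) :=
  ((\sum_(j < d.+1 | (j <= i)%N) (prim_idem Bs sgs j)^T)
   :&: (\sum_(j < d.+1 | (i <= j)%N) (prim_idem B sg j)^T))%MS.

Definition first_split_seq (B Bs : M) (sg sgs : nat -> K) (phi : nat -> K) : Prop :=
  forall i, (1 <= i <= d)%N ->
    forall u : 'rV[K]_(d.+1), (u <= split_U B Bs sg sgs i)%MS ->
      u *m ((B - (sg i.-1)%:M) *m (Bs - (sgs i)%:M))^T = phi i *: u.

(* eigenvalue sequence of the Leonard system Phi^Downarrow *)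
Definition rev_seq (th : nat -> K) : nat -> K := fun i => th (d - i)%N.

Definition tau_s (ths : nat -> K) (i : nat) (x : K) : K :=
  \prod_(h < i) (x - ths h).
Definition eta_s (ths : nat -> K) (i : nat) (x : K) : K :=
  \prod_(h < i) (x - ths (d - h)%N).

End Leonard.

(* Main.v *)
Require Import Defs.
From mathcomp Require Import all_boot all_order all_algebra.
From mathcomp Require Import zify ring.
Set Implicit Arguments. Unset Strict Implicit. Unset Printing Implicit Defensive.
Import GRing.Theory.
Local Open Scope ring_scope.

Section Aux.
Variables (K : fieldType) (d : nat).
Local Notation M := 'M[K]_(d.+1).

Lemma row_prod m (v : 'M[K]_(m, d.+1)) (I : Type) (r : seq I) (P : pred I)
    (f : I -> M) (s : I -> K) :
  (forall i, P i -> v *m f i = s i *: v) ->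
  v *m \prod_(i <- r | P i) f i = (\prod_(i <- r | P i) s i) *: v.
Proof.
move=> H.
apply: (big_rec2 (fun (y : K) (x : M) => v *m x = y *: v)).
  by rewrite mulmx1 scale1r.
move=> i y x Pi IH; rewrite -mulmxE mulmxA H // -scalemxAl IH scalerA.
done.
Qed.

Lemma mx_ext (X Y : M) : (forall v : 'rV[K]_(d.+1), v *m X = v *m Y) -> X = Y.
Proof. by move=> H; apply/row_matrixP => i; rewrite !rowE H. Qed.

Lemma eig_fac m (v : 'M[K]_(m, d.+1)) (a : M) (t c x : K) :
  v *m a = t *: v -> v *m (c *: (a - x%:M)) = (c * (t - x)) *: v.
Proof.
move=> H; rewrite -scalemxAr mulmxBr H mul_mx_scalar -scalerBl scalerA //.
Qed.

Lemma comm_fac (a : M) (c x c' x' : K) :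
  GRing.comm (c *: (a - x%:M)) (c' *: (a - x'%:M)).
Proof.
rewrite /GRing.comm -!mulmxE -!scalemxAl -!scalemxAr !scalerA mulrC; congr (_ *: _).
rewrite !mulmxBl !mulmxBr !mul_mx_scalar !mul_scalar_mx.
rewrite !scale_scalar_mx [x * x']mulrC !opprB !addrA; rewrite -!addrA; congr (_ + _).
by rewrite addrCA [RHS]addrCA (addrC (- (x' *: a))).
Qed.

Lemma comm_a_fac (a : M) (c x : K) : GRing.comm a (c *: (a - x%:M)).
Proof.
rewrite /GRing.comm -!mulmxE -scalemxAl -scalemxAr.
by rewrite mulmxBl mulmxBr mul_mx_scalar mul_scalar_mx.
Qed.

Lemma comm_idem (a : M) th i (c x : K) : GRing.comm (c *: (a - x%:M)) (prim_idem a th i).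
Proof. by apply: commr_prod => j _; apply: comm_fac. Qed.

Lemma comm_a_idem (a : M) th i : GRing.comm a (prim_idem a th i).
Proof. by apply: commr_prod => j _; apply: comm_a_fac. Qed.

End Aux.


Section Eig.
Variables (K : fieldType) (d : nat) (a : 'M[K]_(d.+1)) (th : nat -> K).
Hypothesis Hth : eig_ordering a th.
Local Notation F := (prim_idem a th).
Local Notation ev j := (eigenspace a (th j)).

Lemma th_inj i j : (i <= d)%N -> (j <= d)%N -> th i = th j -> i = j.
Proof. by case: Hth => H _; apply: H. Qed.

Lemma ev_F m (W : 'M_(m,d.+1)) k j : (k <= d)%N -> (j <= d)%N -> (W <= ev k)%MS ->
  W *m F j = (k == j)%:R *: W.
Proof.
move=> hk hj /eigenspaceP HW.
rewrite /prim_idem (row_prod _ (s := fun j' : 'I_d.+1 => (th j - th j')^-1 * (th k - th j'))); last first.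
  by move=> j' _; apply: eig_fac.
case: (eqVneq k j) => [<-|nkj].
  rewrite big1 ?scale1r // => j' nj'; rewrite mulVf // subr_eq0; apply/eqP => E.
  by move/eqP: nj'; apply; apply: th_inj => //; rewrite -ltnS.
have hk' : (k < d.+1)%N by [].
rewrite (bigD1 (Ordinal hk')) /=; last by [].
by rewrite subrr mulr0 mul0r.
Qed.

Lemma sum_ones n : (\sum_(i < n) 1 = n)%N.
Proof. by rewrite sum1_card card_ord. Qed.

Lemma sum_ones_but n (j : 'I_n) : (\sum_(i < n | i != j) 1 = n.-1)%N.
Proof.
have E := sum_ones n; rewrite (bigD1 j) //= add1n in E.
by rewrite -[in RHS]E.
Qed.

Lemma ev_inj : {in predT &, injective (fun j : 'I_d.+1 => th j)}.
Proof.
move=> i j _ _ /= E; apply: val_inj; apply: th_inj E; by rewrite -ltnS ltn_ord.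
Qed.

Lemma ev_sum_rank : \rank (\sum_(i < d.+1) ev i)%MS = (\sum_(i < d.+1) \rank (ev i))%N.
Proof.
have dir := mxdirect_sum_eigenspace a ev_inj.
by move/mxdirectP: dir.
Qed.

Lemma ev_pos j : (j <= d)%N -> (0 < \rank (ev j))%N.
Proof. by move=> hj; rewrite lt0n mxrank_eq0; case: Hth => _ H; apply: H. Qed.

Lemma ev_rank j : (j <= d)%N -> \rank (ev j) = 1%N.
Proof.
move=> hj; have hj' : (j < d.+1)%N by [].
have le := rank_leq_col (\sum_(i < d.+1) ev i)%MS.
rewrite ev_sum_rank (bigD1 (Ordinal hj')) //= in le.
have : (\sum_(i < d.+1 | i != Ordinal hj') 1 <= \sum_(i < d.+1 | i != Ordinal hj') \rank (ev i))%N.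
  by apply: leq_sum => i _; apply: ev_pos; rewrite -ltnS.
rewrite sum_ones_but /= => ge.
have p := ev_pos hj.
apply/eqP; rewrite eqn_leq p andbT.
have := leq_trans (leq_add (leqnn (\rank (ev j))) ge) le.
by move=> H; rewrite -(leq_add2r d) add1n.
Qed.

Lemma ev_full : (1%:M <= \sum_(i < d.+1) ev i)%MS.
Proof.
apply: submx_full; rewrite /row_full ev_sum_rank.
rewrite (eq_bigr (fun _ => 1%N)) ?sum_ones // => i _.
by apply: ev_rank; rewrite -ltnS.
Qed.

Lemma decomp (v : 'rV[K]_(d.+1)) : exists u_ : 'I_d.+1 -> 'rV_(d.+1),
  v = \sum_(i < d.+1) u_ i *m ev i.
Proof. by apply/sub_sumsmxP; apply: submx_trans ev_full; apply: submx1. Qed.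

Lemma vF_eq (v : 'rV[K]_(d.+1)) (u_ : 'I_d.+1 -> 'rV_(d.+1)) (j : 'I_d.+1) :
  v = \sum_(i < d.+1) u_ i *m ev i -> v *m F j = u_ j *m ev j.
Proof.
have hj : (j <= d)%N by rewrite -ltnS ltn_ord.
move=> ->; rewrite mulmx_suml (bigD1 j) ?inE; last by [].
rewrite big1; last first.
  move=> i nij; have hi : (i <= d)%N by rewrite -ltnS ltn_ord.
  rewrite (@ev_F _ _ i j hi hj (submxMl _ _)).
  by rewrite (inj_eq val_inj) (negbTE nij) scale0r.
by rewrite /= addr0 (@ev_F _ _ j j hj hj (submxMl _ _)) eqxx scale1r.
Qed.

Lemma vF_ev (v : 'rV[K]_(d.+1)) j : (j <= d)%N -> (v *m F j <= ev j)%MS.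
Proof.
move=> hj; have hj' : (j < d.+1)%N by [].
have [u_ Hu] := decomp v.
have E := vF_eq (Ordinal hj') Hu; rewrite /= in E.
by rewrite E submxMl.
Qed.

Lemma sumF : \sum_(j < d.+1) F j = 1%:M.
Proof.
apply: mx_ext => v; rewrite mulmx1 mulmx_sumr.
have [u_ Hu] := decomp v.
rewrite [in RHS]Hu; apply: eq_bigr => j _; exact: vF_eq.
Qed.

Lemma FF j k : (j <= d)%N -> (k <= d)%N -> F j *m F k = (j == k)%:R *: F j.
Proof.
move=> hj hk; apply: mx_ext => v.
by rewrite mulmxA (@ev_F _ _ j k hj hk (vF_ev v hj)) scalemxAr.
Qed.

Lemma Fa j : (j <= d)%N -> F j *m a = th j *: F j.
Proof.
move=> hj; apply: mx_ext => v.
rewrite mulmxA; move/eigenspaceP: (vF_ev v hj) => ->.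
by rewrite scalemxAr.
Qed.

Lemma aF j : (j <= d)%N -> a *m F j = th j *: F j.
Proof.
move=> hj; have := comm_a_idem a th j; rewrite /GRing.comm -!mulmxE => ->.
exact: Fa.
Qed.

Lemma F_ev j : (j <= d)%N -> (F j :=: ev j)%MS.
Proof.
move=> hj; apply/eqmxP/andP; split.
  by apply/eigenspaceP; apply: Fa.
have E := @ev_F _ (ev j) j j hj hj (submx_refl _).
rewrite eqxx scale1r in E.
by rewrite -E submxMl.
Qed.

Lemma F_rank j : (j <= d)%N -> \rank (F j) = 1%N.
Proof. by move=> hj; rewrite (F_ev hj) ev_rank. Qed.

Lemma F_on_ev m (W : 'M_(m, d.+1)) k j : (k <= d)%N -> (j <= d)%N -> (W <= F k)%MS ->
  W *m F j = (k == j)%:R *: W.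
Proof. by move=> hk hj; rewrite (F_ev hk); apply: ev_F. Qed.

Lemma F_neq0 j : (j <= d)%N -> F j != 0.
Proof. by move=> hj; rewrite -mxrank_eq0 F_rank. Qed.

End Eig.


Section Gen.
Variables (K : fieldType) (d : nat).
Local Notation M := 'M[K]_(d.+1).

Lemma subB_sub m1 m3 (A B : 'M[K]_(m1, d.+1)) (C : 'M[K]_(m3, d.+1)) :
  (A <= C)%MS -> (B <= C)%MS -> (A - B <= C)%MS.
Proof.
move=> hA hB; apply: addmx_sub hA _; rewrite -scaleN1r; exact: scalemx_sub.
Qed.

Lemma shift_sub m1 m2 (X : 'M[K]_(m1, d.+1)) (Y : 'M[K]_(m2, d.+1)) (a : M) (c : K) :
  (X *m (a - c%:M) <= Y)%MS -> (X <= Y)%MS -> (X *m a <= Y)%MS.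
Proof.
move=> h1 h2.
have -> : X *m a = X *m (a - c%:M) + c *: X.
  by rewrite mulmxBr mul_mx_scalar subrK.
by apply: addmx_sub h1 _; apply: scalemx_sub.
Qed.

Lemma fac_sub m (W : 'M[K]_(m, d.+1)) (a : M) (c x : K) :
  (W *m a <= W)%MS -> (W *m (c *: (a - x%:M)) <= W)%MS.
Proof.
move=> h; rewrite -scalemxAr; apply: scalemx_sub.
by rewrite mulmxBr mul_mx_scalar; apply: subB_sub h (scalemx_sub _ _).
Qed.

Lemma idem_sub m (W : 'M[K]_(m, d.+1)) (a : M) th j :
  (W *m a <= W)%MS -> (W *m prim_idem a th j <= W)%MS.
Proof.
move=> h; rewrite /prim_idem.
apply: (big_ind (fun X : M => (W *m X <= W)%MS)).
- by rewrite mulmx1.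
- move=> X Y hX hY; rewrite -mulmxE mulmxA.
  exact: submx_trans (submxMr _ hX) hY.
- by move=> i _; apply: fac_sub.
Qed.

Lemma rank1_sup m1 m2 (X : 'M[K]_(m1, d.+1)) (Y : 'M[K]_(m2, d.+1)) :
  (X <= Y)%MS -> (\rank Y <= 1)%N -> X != 0 -> (Y <= X)%MS.
Proof.
move=> sXY rY nzX.
rewrite -(geq_leqif (mxrank_leqif_sup sXY)).
apply: leq_trans rY _; by rewrite lt0n mxrank_eq0.
Qed.

Lemma rank_sums_le (I : finType) (P : pred I) (B : I -> M) :
  (\rank (\sum_(i | P i) B i)%MS <= \sum_(i | P i) \rank (B i))%N.
Proof.
apply: (big_rec2 (fun (n : nat) (X : M) => (\rank X <= n)%N)).
  by rewrite mxrank0.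
move=> i n X _ h; apply: leq_trans (mxrank_adds_leqif _ _).1 _.
by rewrite leq_add2l.
Qed.

Lemma count_le (P : pred 'I_d.+1) (j0 : 'I_d.+1) : ~~ P j0 ->
  (\sum_(i < d.+1 | P i) 1 <= d)%N.
Proof.
move=> nP.
have E : (\sum_(i < d.+1 | i != j0) 1 = d)%N by rewrite sum_ones_but.
rewrite -[X in (_ <= X)%N]E big_mkcond [X in (_ <= X)%N]big_mkcond /=.
apply: leq_sum => i _; case: (eqVneq i j0) => [E2|_]; last by case: (P i).
by rewrite E2 (negbTE nP).
Qed.

Lemma sum_split (i : nat) :
  (\sum_(j < d.+1 | (j <= i)%N) 1 + \sum_(j < d.+1 | (i.+1 <= j)%N) 1 = d.+1)%N.
Proof.
have E := sum_ones d.+1; rewrite (bigID (fun j : 'I_d.+1 => (j <= i)%N)) /= in E.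
rewrite -[in RHS]E; congr (_ + _)%N; apply: eq_bigl => j; by rewrite ltnNge.
Qed.

End Gen.


Section Split.
Variables (K : fieldType) (d : nat) (a b : 'M[K]_(d.+1)) (th ths : nat -> K).
Local Notation M := 'M[K]_(d.+1).
Hypothesis Hth : eig_ordering a th.
Hypothesis Hths : eig_ordering b ths.
Local Notation F := (prim_idem a th).
Local Notation G := (prim_idem b ths).
Hypothesis HtriF : forall i j, (i <= d)%N -> (j <= d)%N -> ((j.+1 < i)%N || (i.+1 < j)%N) ->
  F i *m b *m F j = 0.
Hypothesis HtriG : forall i j, (i <= d)%N -> (j <= d)%N -> ((j.+1 < i)%N || (i.+1 < j)%N) ->
  G i *m a *m G j = 0.
Hypothesis HnzF : forall i j, (i <= d)%N -> (j <= d)%N -> ((j.+1 == i) || (i.+1 == j)) ->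
  F i *m b *m F j != 0.

Definition SS i := (\sum_(j < d.+1 | (j <= i)%N) G j)%MS.
Definition TT i := (\sum_(j < d.+1 | (i <= j)%N) F j)%MS.
Definition UU i := (SS i :&: TT i)%MS.

Lemma ordle (j : 'I_d.+1) : (j <= d)%N.
Proof. by rewrite -ltnS ltn_ord. Qed.

Lemma SS_mono i k : (i <= k)%N -> (SS i <= SS k)%MS.
Proof.
move=> hik; apply/sumsmx_subP => j hj; apply: (sumsmx_sup j) => //.
exact: leq_trans hik.
Qed.

Lemma TT_anti i k : (i <= k)%N -> (TT k <= TT i)%MS.
Proof.
move=> hik; apply/sumsmx_subP => j hj; apply: (sumsmx_sup j) => //.
exact: leq_trans hj.
Qed.

Lemma G_SS j i : (j <= i)%N -> (j <= d)%N -> (G j <= SS i)%MS.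
Proof.
move=> hji hj; have hj' : (j < d.+1)%N by [].
exact: (sumsmx_sup (Ordinal hj')).
Qed.

Lemma F_TT j i : (i <= j)%N -> (j <= d)%N -> (F j <= TT i)%MS.
Proof.
move=> hji hj; have hj' : (j < d.+1)%N by [].
exact: (sumsmx_sup (Ordinal hj')).
Qed.

Lemma full_TT0 : (1%:M <= TT 0)%MS.
Proof.
rewrite -(sumF Hth); apply: summx_sub => j _.
exact: F_TT (ordle j).
Qed.

Lemma TT_over : TT d.+1 = 0.
Proof. by apply: big_pred0 => j /=; rewrite ltnNge ordle. Qed.

Lemma Fb_sub j : (j <= d)%N -> (F j *m b <= TT j.-1)%MS.
Proof.
move=> hj.
have -> : F j *m b = \sum_(k < d.+1) F j *m b *m F k.
  by rewrite -mulmx_sumr (sumF Hth) mulmx1.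
apply: summx_sub => k _.
case: (leqP j.-1 k) => hk.
  exact: submx_trans (submxMl _ _) (F_TT hk (ordle k)).
rewrite HtriF ?ordle ?sub0mx //.
by apply/orP; left; rewrite -ltn_predRL.
Qed.

Lemma Ga_sub j : (j <= d)%N -> (G j *m a <= SS j.+1)%MS.
Proof.
move=> hj.
have -> : G j *m a = \sum_(k < d.+1) G j *m a *m G k.
  by rewrite -mulmx_sumr (sumF Hths) mulmx1.
apply: summx_sub => k _.
case: (leqP k j.+1) => hk.
  exact: submx_trans (submxMl _ _) (G_SS hk (ordle k)).
rewrite HtriG ?ordle ?sub0mx //.
by apply/orP; right.
Qed.

Lemma TT_a i : (TT i *m (a - (th i)%:M) <= TT i.+1)%MS.
Proof.
rewrite sumsmxMr; apply/sumsmx_subP => j hij.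
rewrite mulmxBr (Fa Hth (ordle j)) mul_mx_scalar -scalerBl.
case: (eqVneq (j : nat) i) => [E|ne].
  by rewrite E subrr scale0r sub0mx.
apply: scalemx_sub; apply: F_TT (ordle j).
by rewrite ltn_neqAle eq_sym ne hij.
Qed.

Lemma SS_a i : (SS i *m (a - (th i)%:M) <= SS i.+1)%MS.
Proof.
rewrite mulmxBr mul_mx_scalar; apply: subB_sub.
  rewrite sumsmxMr; apply/sumsmx_subP => j hij.
  exact: submx_trans (Ga_sub (ordle j)) (SS_mono _).
exact: scalemx_sub (SS_mono (leqnSn i)).
Qed.

Lemma SS_a_gen i c : (SS i *m (a - c%:M) <= SS i.+1)%MS.
Proof.
rewrite mulmxBr mul_mx_scalar; apply: subB_sub.
  rewrite sumsmxMr; apply/sumsmx_subP => j hij.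
  exact: submx_trans (Ga_sub (ordle j)) (SS_mono _).
exact: scalemx_sub (SS_mono (leqnSn i)).
Qed.

Lemma SS_b i : (SS i *m (b - (ths i)%:M) <= SS i.-1)%MS.
Proof.
rewrite sumsmxMr; apply/sumsmx_subP => j hij.
rewrite mulmxBr (Fa Hths (ordle j)) mul_mx_scalar -scalerBl.
case: (eqVneq (j : nat) i) => [E|ne].
  by rewrite E subrr scale0r sub0mx.
apply: scalemx_sub; apply: G_SS (ordle j).
have lt : (j < i)%N by rewrite ltn_neqAle ne hij.
by move: lt; case: (i) => [|i'].
Qed.

Lemma TT_b i : (TT i *m (b - (ths i)%:M) <= TT i.-1)%MS.
Proof.
rewrite mulmxBr mul_mx_scalar; apply: subB_sub.
  rewrite sumsmxMr; apply/sumsmx_subP => j hij.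
  apply: submx_trans (Fb_sub (ordle j)) (TT_anti _).
  by rewrite -!subn1 leq_sub2r.
by apply: scalemx_sub; apply: TT_anti; apply: leq_pred.
Qed.


Lemma UU_a i : (UU i *m (a - (th i)%:M) <= UU i.+1)%MS.
Proof.
rewrite sub_capmx; apply/andP; split.
  exact: submx_trans (submxMr _ (capmxSl _ _)) (SS_a i).
exact: submx_trans (submxMr _ (capmxSr _ _)) (TT_a i).
Qed.

Lemma UU_b i : (UU i *m (b - (ths i)%:M) <= UU i.-1)%MS.
Proof.
rewrite sub_capmx; apply/andP; split.
  exact: submx_trans (submxMr _ (capmxSl _ _)) (SS_b i).
exact: submx_trans (submxMr _ (capmxSr _ _)) (TT_b i).
Qed.

Lemma UU_big k : (d < k)%N -> UU k = 0.
Proof.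
move=> hk; apply/eqP; rewrite -submx0; rewrite -TT_over.
exact: submx_trans (capmxSr _ _) (TT_anti hk).
Qed.

Lemma irred m (W : 'M_(m, d.+1)) : (W *m a <= W)%MS -> (W *m b <= W)%MS -> W != 0 ->
  (1%:M <= W)%MS.
Proof.
move=> Wa Wb nzW.
have WF j : (W *m F j <= W)%MS by apply: idem_sub.
have [j0 nz0] : exists j0 : 'I_d.+1, W *m F j0 != 0.
  case: (pickP (fun j : 'I_d.+1 => W *m F j != 0)) => [j nz | none].
    by exists j.
  have : W = 0.
    rewrite -[W]mulmx1 -(sumF Hth) mulmx_sumr big1 // => j _.
    by move: (none j) => /= /negbFE /eqP.
  by move/eqP; rewrite (negbTE nzW).
have hj0 := ordle j0.
have F0W : (F j0 <= W)%MS.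
  apply: submx_trans (WF j0).
  by apply: rank1_sup (submxMl _ _) _ nz0; rewrite F_rank.
have stepW k k' : (k <= d)%N -> (k' <= d)%N -> ((k.+1 == k') || (k'.+1 == k)) ->
    (F k <= W)%MS -> (F k' <= W)%MS.
  move=> hk hk' adj FkW.
  have nzX : F k *m b *m F k' != 0 by apply: HnzF => //; rewrite orbC.
  apply: submx_trans (rank1_sup (submxMl _ _) _ nzX) _.
    by rewrite F_rank.
  apply: submx_trans (WF k').
  by apply: submxMr; apply: submx_trans (submxMr _ FkW) Wb.
have up n : (j0 + n <= d)%N -> (F (j0 + n)%N <= W)%MS.
  elim: n => [|n IH] h; first by rewrite addn0.
  apply: (stepW (j0 + n)%N) => //.
  - by apply: ltnW; rewrite -addnS.
  - by rewrite addnS eqxx.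
  by apply: IH; apply: ltnW; rewrite -addnS.
have dn n : (n <= j0)%N -> (F (j0 - n)%N <= W)%MS.
  elim: n => [|n IH] h; first by rewrite subn0.
  apply: (stepW (j0 - n)%N).
  - by apply: leq_trans (leq_subr _ _) hj0.
  - by apply: leq_trans (leq_subr _ _) hj0.
  - by rewrite subnS prednK ?eqxx ?orbT // subn_gt0.
  by apply: IH; apply: ltnW.
have allF k : (k <= d)%N -> (F k <= W)%MS.
  move=> hk; case: (leqP j0 k) => h.
    by rewrite -(subnKC h); apply: up; rewrite subnKC.
  rewrite -(subKn (ltnW h)); apply: dn; exact: leq_subr.
rewrite -(sumF Hth); apply: summx_sub => j _; exact: allF (ordle j).
Qed.

Lemma G0_UU0 : (G 0%N <= UU 0%N)%MS.
Proof.
rewrite sub_capmx; apply/andP; split.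
  exact: G_SS (leqnn 0) (leq0n d).
exact: submx_trans (submx1 _) full_TT0.
Qed.

Lemma UU_sub (P : pred 'I_d.+1) k :
  (forall j : 'I_d.+1, (j : nat) = k -> P j) -> (UU k <= \sum_(j | P j) UU j)%MS.
Proof.
move=> hP; case: (leqP k d) => hk.
  have hk' : (k < d.+1)%N by [].
  by apply: (sumsmx_sup (Ordinal hk')) => //; apply: hP.
by rewrite UU_big // sub0mx.
Qed.

Lemma Ua_sub (P : pred 'I_d.+1) (i : 'I_d.+1) : P i ->
  (forall j : 'I_d.+1, (j : nat) = i.+1 -> P j) -> (UU i *m a <= \sum_(j | P j) UU j)%MS.
Proof.
move=> Pi hP; apply: (shift_sub (c := th i)).
  exact: submx_trans (UU_a i) (UU_sub hP).
by apply: UU_sub => j /val_inj ->.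
Qed.

Lemma Ub_sub (P : pred 'I_d.+1) (i : 'I_d.+1) : P i ->
  (forall j : 'I_d.+1, (j : nat) = i.-1 -> P j) -> (UU i *m b <= \sum_(j | P j) UU j)%MS.
Proof.
move=> Pi hP; apply: (shift_sub (c := ths i)).
  exact: submx_trans (UU_b i) (UU_sub hP).
by apply: UU_sub => j /val_inj ->.
Qed.

Lemma G0_neq0 : G 0%N != 0.
Proof. exact: (F_neq0 Hths (leq0n d)). Qed.

Lemma WW_full : (1%:M <= \sum_(i < d.+1) UU i)%MS.
Proof.
apply: irred.
- by rewrite sumsmxMr; apply/sumsmx_subP => i _; apply: Ua_sub.
- by rewrite sumsmxMr; apply/sumsmx_subP => i _; apply: Ub_sub.
move: G0_neq0; apply: contra => /eqP E; rewrite -submx0 -E.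
apply: submx_trans G0_UU0 _; exact: (sumsmx_sup ord0).
Qed.


Lemma nz_sub m1 m2 (X : 'M[K]_(m1, d.+1)) (W : 'M[K]_(m2, d.+1)) :
  (X <= W)%MS -> X != 0 -> W != 0.
Proof.
move=> h nz; apply/negP => /eqP E; move: nz; rewrite E in h.
by rewrite (submx0null h) eqxx.
Qed.

Lemma rank_SS i : (\rank (SS i) <= \sum_(j < d.+1 | (j <= i)%N) 1)%N.
Proof.
apply: leq_trans (rank_sums_le _ _) _; apply: leq_sum => j _.
by rewrite (F_rank Hths (ordle j)).
Qed.

Lemma rank_TT i : (\rank (TT i) <= \sum_(j < d.+1 | (i <= j)%N) 1)%N.
Proof.
apply: leq_trans (rank_sums_le _ _) _; apply: leq_sum => j _.
by rewrite (F_rank Hth (ordle j)).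
Qed.

Lemma cap0 i : \rank (SS i :&: TT i.+1)%MS = 0%N.
Proof.
have full : (1%:M <= SS i + TT i.+1)%MS.
  apply: submx_trans WW_full _; apply/sumsmx_subP => k _.
  case: (leqP k i) => hk.
    apply: submx_trans (capmxSl _ _) _; exact: submx_trans (SS_mono hk) (addsmxSl _ _).
  apply: submx_trans (capmxSr _ _) _; exact: submx_trans (TT_anti hk) (addsmxSr _ _).
have r1 : \rank (SS i + TT i.+1)%MS = d.+1.
  apply/eqP; rewrite eqn_leq rank_leq_col /=.
  by have := mxrankS full; rewrite mxrank1.
have le : (\rank (SS i) + \rank (TT i.+1) <= d.+1)%N.
  exact: leq_trans (leq_add (rank_SS i) (rank_TT i.+1)) (eq_leq (sum_split d i)).
have E := mxrank_sum_cap (SS i) (TT i.+1); rewrite r1 in E.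
have : (d.+1 + \rank (SS i :&: TT i.+1)%MS <= d.+1 + 0)%N by rewrite addn0 E.
by rewrite leq_add2l leqn0 => /eqP.
Qed.

Lemma SS_succ k : (SS k.+1 <= SS k + G k.+1)%MS.
Proof.
apply/sumsmx_subP => j hj; case: (leqP j k) => h.
  exact: submx_trans (G_SS h (ordle j)) (addsmxSl _ _).
have -> : (j : nat) = k.+1 by apply/eqP; rewrite eqn_leq hj h.
exact: addsmxSr.
Qed.

Lemma UU_le1 i : (\rank (UU i) <= 1)%N.
Proof.
case: i => [|k].
  apply: leq_trans (mxrankS _) (eq_leq (F_rank Hths (leq0n d))).
  apply: submx_trans (capmxSl _ _) _; apply/sumsmx_subP => j.
  by rewrite leqn0 => /eqP ->.
case: (leqP k.+1 d) => hk; last by rewrite UU_big // mxrank0.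
have c0 : \rank (UU k.+1 :&: SS k)%MS = 0%N.
  apply/eqP; rewrite -leqn0 -(cap0 k); apply: mxrankS.
  rewrite sub_capmx capmxSr /=.
  exact: submx_trans (capmxSl _ _) (capmxSr _ _).
have E := mxrank_sum_cap (UU k.+1) (SS k); rewrite c0 addn0 in E.
have le1 : (\rank (UU k.+1 + SS k)%MS <= \rank (SS k + G k.+1)%MS)%N.
  apply: mxrankS.
  by rewrite addsmx_sub (submx_trans (capmxSl _ _) (SS_succ k)) addsmxSl.
have le2 := (mxrank_adds_leqif (SS k) (G k.+1)).1.
rewrite (F_rank Hths hk) E in le2 le1.
by have := leq_trans le1 le2; rewrite [X in (_ <= X)%N]addnC leq_add2r.
Qed.


Lemma UU_rank i : (i <= d)%N -> \rank (UU i) = 1%N.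
Proof.
move=> hi; have hi' : (i < d.+1)%N by [].
apply/eqP; rewrite eqn_leq UU_le1 /=.
have h1 := mxrankS WW_full; rewrite mxrank1 in h1.
have h2 := leq_trans h1 (rank_sums_le _ _).
rewrite (bigD1 (Ordinal hi')) //= in h2.
have h3 : (\sum_(j < d.+1 | j != Ordinal hi') \rank (UU j) <= d)%N.
  have E1 := sum_ones_but (Ordinal hi'); rewrite /= in E1.
  rewrite -[X in (_ <= X)%N]E1; apply: leq_sum => j _; exact: UU_le1.
have := leq_trans h2 (leq_add (leqnn _) h3).
by rewrite -{1}(add1n d) leq_add2r.
Qed.

Variable u0 : 'rV[K]_(d.+1).
Hypothesis hu0 : (u0 <= G 0%N)%MS.
Hypothesis nzu0 : u0 != 0.

Fixpoint useq k := if k is k'.+1 then useq k' *m (a - (th k')%:M) else u0.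

Lemma useq_UU k : (useq k <= UU k)%MS.
Proof.
elim: k => [|k IH] /=; first exact: submx_trans hu0 G0_UU0.
exact: submx_trans (submxMr _ IH) (UU_a k).
Qed.

Lemma useq_SS k : (useq k <= SS k)%MS.
Proof. exact: submx_trans (useq_UU k) (capmxSl _ _). Qed.

Lemma useq_last : useq d.+1 = 0.
Proof. by have := useq_UU d.+1; rewrite UU_big // submx0 => /eqP. Qed.

Lemma UU_span k : (k <= d)%N -> useq k != 0 -> (UU k <= useq k)%MS.
Proof. by move=> hk nz; apply: rank1_sup (useq_UU k) (UU_le1 k) nz. Qed.

Lemma UU_eig k (c : 'M[K]_(d.+1)) (s : K) : (k <= d)%N -> useq k != 0 ->
  useq k *m c = s *: useq k -> (UU k *m c <= UU k)%MS.
Proof.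
move=> hk nz E; have [D hD] := submxP (UU_span hk nz).
rewrite hD -mulmxA E -scalemxAr; apply: scalemx_sub; exact: submx_refl.
Qed.

Lemma useq_nz k : (k <= d)%N -> useq k != 0.
Proof.
elim: k => [|k IH] hk; first exact: nzu0.
have nzk := IH (ltnW hk).
apply/negP => /eqP E.
have ua : useq k *m a = th k *: useq k.
  by move: E => /= /eqP; rewrite mulmxBr mul_mx_scalar subr_eq0 => /eqP.
have Uk := UU_eig (ltnW hk) nzk ua.
pose P := fun j : 'I_d.+1 => (j <= k)%N.
have full : (1%:M <= \sum_(j | P j) UU j)%MS.
  apply: irred.
  - rewrite sumsmxMr; apply/sumsmx_subP => j hj; rewrite /P in hj.
    case: (eqVneq (j : nat) k) => [ejk|njk].
      rewrite ejk; apply: submx_trans Uk (UU_sub _) => j' e; rewrite /P e; exact: leqnn.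
    apply: (Ua_sub hj) => j' e; rewrite /P e; by rewrite ltn_neqAle njk hj.
  - rewrite sumsmxMr; apply/sumsmx_subP => j hj; rewrite /P in hj.
    apply: (Ub_sub hj) => j' e; rewrite /P e; exact: leq_trans (leq_pred _) hj.
  apply: (nz_sub (X := UU 0%N)); first by apply: UU_sub => j' e; rewrite /P e.
  by rewrite -mxrank_eq0 UU_rank.
have h1 := mxrankS full; rewrite mxrank1 in h1.
have h2 := leq_trans h1 (rank_sums_le _ _).
have h3 : (\sum_(j < d.+1 | P j) \rank (UU j) <= d)%N.
  have nP : ~~ P ord_max by rewrite /P /= -ltnNge.
  apply: leq_trans (count_le nP).
  apply: leq_sum => j _; exact: UU_le1.
by have := leq_trans h2 h3; rewrite ltnn.
Qed.

Lemma useq0_b : useq 0 *m (b - (ths 0%N)%:M) = 0.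
Proof.
have : (u0 <= eigenspace b (ths 0%N))%MS by rewrite -(F_ev Hths (leq0n d)).
by move/eigenspaceP => /= E; rewrite mulmxBr E mul_mx_scalar subrr.
Qed.

Variable phi : nat -> K.
Hypothesis Hphi : forall k, (1 <= k <= d)%N -> forall u : 'rV[K]_(d.+1), (u <= UU k)%MS ->
  u *m (b - (ths k)%:M) *m (a - (th k.-1)%:M) = phi k *: u.

Lemma useq_b k : (1 <= k <= d)%N -> useq k *m (b - (ths k)%:M) = phi k *: useq k.-1.
Proof.
case/andP=> hk1 hkd.
have hk' : (k.-1 <= d)%N by apply: leq_trans (leq_pred _) hkd.
have sub : (useq k *m (b - (ths k)%:M) <= useq k.-1)%MS.
  apply: submx_trans (submxMr _ (useq_UU k)) _.
  apply: submx_trans (UU_b k) (UU_span hk' (useq_nz hk')).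
have [D hD] := submxP sub.
rewrite (mx11_scalar D) mul_scalar_mx in hD.
have hk : (1 <= k <= d)%N by rewrite hk1 hkd.
have H := Hphi hk (useq_UU k); rewrite hD -scalemxAl in H.
have E3 : useq k.-1 *m (a - (th k.-1)%:M) = useq k.
  by rewrite -[in RHS](prednK hk1).
rewrite E3 in H; move/eqP: H.
rewrite -subr_eq0 -scalerBl scalemx_eq0 (negbTE (useq_nz hkd)) orbF.
by rewrite subr_eq0 => /eqP E; rewrite hD E.
Qed.

Lemma phi_nz k : (1 <= k <= d)%N -> phi k != 0.
Proof.
move=> hk; case/andP: (hk) => hk1 hkd.
apply/negP => /eqP E.
have ub : useq k *m b = ths k *: useq k.
  by move: (useq_b hk) => /eqP; rewrite E scale0r mulmxBr mul_mx_scalar subr_eq0 => /eqP.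
have Uk := UU_eig hkd (useq_nz hkd) ub.
pose P := fun j : 'I_d.+1 => (k <= j)%N.
have full : (1%:M <= \sum_(j | P j) UU j)%MS.
  apply: irred.
  - rewrite sumsmxMr; apply/sumsmx_subP => j hj; rewrite /P in hj.
    apply: (Ua_sub hj) => j' e; rewrite /P e; exact: leq_trans hj (leqnSn _).
  - rewrite sumsmxMr; apply/sumsmx_subP => j hj; rewrite /P in hj.
    case: (eqVneq (j : nat) k) => [ejk|njk].
      rewrite ejk; apply: submx_trans Uk (UU_sub _) => j' e; rewrite /P e; exact: leqnn.
    apply: (Ub_sub hj) => j' e; rewrite /P e.
    have lt : (k < j)%N by rewrite ltn_neqAle eq_sym njk hj.
    by rewrite -ltnS (ltn_predK lt).
  apply: (nz_sub (X := UU d)); first by apply: UU_sub => j' e; rewrite /P e.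
  by rewrite -mxrank_eq0 UU_rank.
have h1 := mxrankS full; rewrite mxrank1 in h1.
have h2 := leq_trans h1 (rank_sums_le _ _).
have h3 : (\sum_(j < d.+1 | P j) \rank (UU j) <= d)%N.
  have nP : ~~ P ord0 by rewrite /P /= -ltnNge.
  apply: leq_trans (count_le nP).
  apply: leq_sum => j _; exact: UU_le1.
by have := leq_trans h2 h3; rewrite ltnn.
Qed.

End Split.


Lemma rev_lemma (R : comNzRingType) (g : nat -> R) m n : (m <= n)%N ->
  \prod_(h < n - m) g (n - h)%N = \prod_(m.+1 <= h < n.+1) g h.
Proof.
elim: n => [|n IH] hmn.
  by move: hmn; rewrite leqn0 => /eqP ->; rewrite big_ord0 big_geq.
case: (leqP m n) => h.
  rewrite (subSn h) big_ord_recl big_nat_recr /=; last by [].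
  rewrite subn0 -IH // mulrC; congr (_ * _); apply: eq_bigr => j _.
have -> : m = n.+1 by apply/eqP; rewrite eqn_leq hmn h.
by rewrite subnn big_ord0 big_geq.
Qed.

Lemma prod_but (R : comNzRingType) (f : nat -> R) d i : (i <= d)%N ->
  \prod_(j < d.+1 | (j : nat) != i) f j =
  \prod_(h < i) f h * \prod_(h < d - i) f (d - h)%N.
Proof.
move=> hid.
rewrite -(big_mkord (fun j => j != i) f).
rewrite (@big_cat_nat _ _ _ i 0 d.+1 _ _ (leq0n i) (leqW hid)).
rewrite rev_lemma //; congr (_ * _).
  rewrite big_mkord; apply: eq_bigl => j; by rewrite (ltn_eqF (ltn_ord j)).
rewrite big_ltn_cond ?ltnS // eqxx big_nat_cond [RHS]big_nat_cond.
apply: eq_bigl => j; rewrite andbT; case: (ltnP i j) => h /=; last by []. 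
by rewrite eq_sym (ltn_eqF h) andbT.
Qed.

Section Tr.
Variables (K : fieldType) (d : nat).
Local Notation M := 'M[K]_(d.+1).

Lemma tr_fac (A : M) (c x : K) : (c *: (A - x%:M))^T = c *: (A^T - x%:M).
Proof. by rewrite linearZ linearB /= tr_scalar_mx. Qed.

Lemma trmx_idem (A : M) th i : (prim_idem A th i)^T = prim_idem A^T th i.
Proof.
rewrite /prim_idem.
pose KK := fun X Y : M => X^T = Y /\ forall c x, GRing.comm (c *: (A^T - x%:M)) Y.
suff : KK (\prod_(j < d.+1 | (j:nat) != i) ((th i - th j)^-1 *: (A - (th j)%:M)))
  (\prod_(j < d.+1 | (j:nat) != i) ((th i - th j)^-1 *: (A^T - (th j)%:M))) by case.
apply: big_rec2.
  by split; [rewrite trmx1 | move=> c x; exact: commr1].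
move=> j X Y _ [E C]; split.
  by rewrite -mulmxE trmx_mul E tr_fac mulmxE; symmetry; apply: C.
move=> c x; apply: commrM; first exact: comm_fac.
exact: C.
Qed.

Lemma eig_tr (A : M) th : eig_ordering A th -> eig_ordering A^T th.
Proof.
case=> H1 H2; split=> // i hi; have := H2 i hi.
rewrite /eigenvalue /eigenspace -!mxrank_eq0 !mxrank_ker.
by rewrite -(mxrank_tr (A - _)) linearB /= tr_scalar_mx.
Qed.

Lemma eig_rev (A : M) th : eig_ordering A th -> eig_ordering A (rev_seq d th).
Proof.
case=> H1 H2; split=> [i j hi hj|i hi]; rewrite /rev_seq.
  move=> E; have := H1 _ _ (leq_subr i d) (leq_subr j d) E.
  by move=> E2; rewrite -(subKn hi) -(subKn hj) E2.
exact: H2 (leq_subr _ _).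
Qed.

Lemma rev_idem (A : M) th i : eig_ordering A th -> (i <= d)%N ->
  prim_idem A (rev_seq d th) i = prim_idem A th (d - i)%N.
Proof.
move=> Hth hi; have Hr := eig_rev Hth.
apply: mx_ext => v.
rewrite -{1}[v]mulmx1 -(sumF Hth) mulmx_sumr !mulmx_suml.
rewrite (bigD1 (Ordinal (leq_ltn_trans (leq_subr i d) (ltnSn d)))) //=.
rewrite big1 ?addr0; last first.
  move=> j nj; have hj := ordle j.
  have sub : (v *m prim_idem A th j <= eigenspace A (rev_seq d th (d - j)%N))%MS.
    by rewrite /rev_seq (subKn hj); apply: vF_ev.
  rewrite (@ev_F _ _ _ _ Hr _ _ _ _ (leq_subr _ _) hi sub).
  have -> : ((d - j)%N == i) = false.
    apply/negP => /eqP E; move/eqP: nj; apply; apply: val_inj => /=.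
    by rewrite -E (subKn hj).
  by rewrite scale0r.
have sub : (v *m prim_idem A th (d - i)%N <= eigenspace A (rev_seq d th i))%MS.
  by rewrite /rev_seq; apply: vF_ev => //; apply: leq_subr.
by rewrite (@ev_F _ _ _ _ Hr _ _ _ _ hi hi sub) eqxx scale1r.
Qed.

End Tr.


Lemma colrow0 (K : fieldType) n (y : 'cV[K]_n) (w : 'rV[K]_n) :
  y *m w = 0 -> w != 0 -> y = 0.
Proof.
move=> E nz.
case: (pickP (fun k => w 0 k != 0)) => [k hk | none]; last first.
  have w0 : w = 0.
    apply/matrixP => i j; rewrite (ord1 i) [RHS]mxE.
    by have := none j; rewrite /= => /negbFE /eqP.
  by rewrite w0 eqxx in nz.
apply/matrixP => i j; rewrite (ord1 j) mxE.
have := congr1 (fun N : 'M[K]_n => N i k) E; rewrite !mxE big_ord1 => /eqP.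
by rewrite mulf_eq0 (negbTE hk) orbF => /eqP.
Qed.

Lemma comm_sub (K : fieldType) d (A : 'M[K]_(d.+1)) x y : GRing.comm (A - x%:M) (A - y%:M).
Proof. by have := comm_fac A 1 x 1 y; rewrite !scale1r. Qed.

Section Final.
Variables (K : fieldType) (d : nat) (a b : 'M[K]_(d.+1)) (th ths phi psi : nat -> K).
Local Notation M := 'M[K]_(d.+1).
Local Notation th' := (rev_seq d th).
Local Notation F := (prim_idem a th).
Local Notation G := (prim_idem b ths).
Hypothesis Hth : eig_ordering a th.
Hypothesis Hths : eig_ordering b ths.
Hypothesis HtriF : forall i j, (i <= d)%N -> (j <= d)%N -> ((j.+1 < i)%N || (i.+1 < j)%N) ->
  F i *m b *m F j = 0.
Hypothesis HtriG : forall i j, (i <= d)%N -> (j <= d)%N -> ((j.+1 < i)%N || (i.+1 < j)%N) ->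
  G i *m a *m G j = 0.
Hypothesis HnzF : forall i j, (i <= d)%N -> (j <= d)%N -> ((j.+1 == i) || (i.+1 == j)) ->
  F i *m b *m F j != 0.
Hypothesis HtriFr : forall i j, (i <= d)%N -> (j <= d)%N -> ((j.+1 < i)%N || (i.+1 < j)%N) ->
  prim_idem a th' i *m b *m prim_idem a th' j = 0.
Hypothesis HnzFr : forall i j, (i <= d)%N -> (j <= d)%N -> ((j.+1 == i) || (i.+1 == j)) ->
  prim_idem a th' i *m b *m prim_idem a th' j != 0.
Hypothesis Hphi : forall k, (1 <= k <= d)%N -> forall u : 'rV[K]_(d.+1), (u <= UU a b th ths k)%MS ->
  u *m (b - (ths k)%:M) *m (a - (th k.-1)%:M) = phi k *: u.
Hypothesis Hpsi : forall k, (1 <= k <= d)%N -> forall u : 'rV[K]_(d.+1), (u <= UU a b th' ths k)%MS ->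
  u *m (b - (ths k)%:M) *m (a - (th' k.-1)%:M) = psi k *: u.
Variable u0 : 'rV[K]_(d.+1).
Hypothesis hu0 : (u0 <= G 0%N)%MS.
Hypothesis nzu0 : u0 != 0.
Local Notation u := (useq a th u0).
Local Notation u' := (useq a th' u0).
Let Hthr := eig_rev Hth.

Lemma ud_eig : u' d *m a = th 0%N *: u' d.
Proof.
have := useq_last Hthr Hths HtriG hu0; rewrite /= /rev_seq subnn.
by move/eqP; rewrite mulmxBr mul_mx_scalar subr_eq0 => /eqP.
Qed.

Lemma ud_nz : u' d != 0.
Proof. exact: (useq_nz Hthr Hths HtriFr HtriG HnzFr hu0 nzu0 (leqnn d)). Qed.

Lemma F0_sub : (F 0%N <= u' d)%MS.
Proof.
apply: rank1_sup _ _ ud_nz; last by rewrite (F_rank Hth (leq0n d)).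
rewrite (F_ev Hth (leq0n d)); apply/eigenspaceP; exact: ud_eig.
Qed.

Variable x : 'cV[K]_(d.+1).
Hypothesis hx : F 0%N = x *m u' d.

Lemma ax : a *m x = th 0%N *: x.
Proof.
apply/eqP; rewrite -subr_eq0; apply/eqP; apply: colrow0 ud_nz.
rewrite mulmxBl -mulmxA -hx -scalemxAl -hx.
by rewrite (aF Hth (leq0n d)) subrr.
Qed.

Lemma u_shift_x k c : u k *m (a - c%:M) *m x = (th 0%N - c) *: (u k *m x).
Proof.
by rewrite -mulmxA mulmxBl ax mul_scalar_mx -scalerBl scalemxAr.
Qed.

Lemma ux_zero m : u m.+1 *m x = 0.
Proof.
elim: m => [|m IH]; first by rewrite (u_shift_x 0) subrr scale0r.
by rewrite (u_shift_x m.+1) IH scaler0.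
Qed.


Lemma u_b m c : (m <= d)%N ->
  u m *m (b - c%:M) = (ths m - c) *: u m + (if m is m'.+1 then phi m *: u m' else 0).
Proof.
move=> hm.
have -> : b - c%:M = (b - (ths m)%:M) + (ths m - c)%:M by rewrite raddfB addrA subrK.
rewrite mulmxDr mul_mx_scalar addrC; congr (_ + _).
case: m hm => [|m'] hm; first exact: (useq0_b a th Hths hu0).
have hk : (1 <= m'.+1 <= d)%N by rewrite hm.
exact: (useq_b Hth Hths HtriF HtriG HnzF hu0 nzu0 Hphi hk).
Qed.

Fixpoint hv k : 'cV[K]_(d.+1) := if k is k'.+1 then (b - (ths k')%:M) *m hv k' else x.

Lemma claimA k : (k <= d)%N -> forall m, (m <= d)%N ->
  u m *m hv k = if m == k then (\prod_(1 <= h < k.+1) phi h) *: (u0 *m x) else 0.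
Proof.
elim: k => [|k IH] hk m hm.
  case: m hm => [|m'] hm; first by rewrite big_geq // scale1r.
  exact: ux_zero.
rewrite [hv _]/= mulmxA (u_b _ hm) mulmxDl -scalemxAl (IH (ltnW hk) m hm).
case: m hm => [|m'] hm.
  rewrite mul0mx addr0; case: (eqVneq 0%N k) => [<-|nk]; first by rewrite subrr scale0r.
  by rewrite scaler0.
rewrite -scalemxAl (IH (ltnW hk) m' (ltnW hm)) eqSS.
case: (eqVneq m' k) => [e|ne].
  by rewrite e (gtn_eqF (ltnSn k)) scaler0 add0r scalerA [in RHS]big_nat_recr //= mulrC.
rewrite scaler0 addr0.
case: (eqVneq m'.+1 k) => [e|_]; last by rewrite scaler0.
by rewrite e subrr scale0r.
Qed.


Lemma M_hv k : \prod_(h < k) (b - (ths h)%:M) *m x = hv k.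
Proof.
elim: k => [|k IH]; first by rewrite big_ord0 mul1mx.
rewrite big_ord_recr /=.
have -> : (\prod_(i < k) (b - (ths i)%:M)) * (b - (ths k)%:M) =
          (b - (ths k)%:M) * \prod_(i < k) (b - (ths i)%:M).
  by symmetry; apply: commr_prod => i _; apply: comm_sub.
by rewrite -mulmxE -mulmxA IH.
Qed.

Lemma claimB n : (n <= d)%N ->
  u' d *m \prod_(h < n) (b - (ths (d - h)%N)%:M) = (\prod_(h < n) psi (d - h)%N) *: u' (d - n)%N.
Proof.
elim: n => [|n IH] hn; first by rewrite !big_ord0 mulmx1 scale1r subn0.
rewrite !big_ord_recr /= -mulmxE mulmxA (IH (ltnW hn)) -scalemxAl.
have hk : (1 <= d - n <= d)%N by rewrite subn_gt0 hn leq_subr.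
rewrite (useq_b Hthr Hths HtriFr HtriG HnzFr hu0 nzu0 Hpsi hk).
by rewrite scalerA subnS.
Qed.

Lemma G_hv j k : (j <= d)%N -> G j *m hv k = (\prod_(h < k) (ths j - ths h)) *: (G j *m x).
Proof.
move=> hj; elim: k => [|k IH]; first by rewrite big_ord0 scale1r.
rewrite [hv _]/= mulmxA mulmxBr (Fa Hths hj) mul_mx_scalar -scalerBl -scalemxAl IH.
by rewrite scalerA big_ord_recr /= mulrC.
Qed.

Lemma SS_hv (v : 'rV[K]_(d.+1)) k : (v <= SS b ths k.-1)%MS -> (0 < k)%N -> v *m hv k = 0.
Proof.
move=> /sub_sumsmxP [w ->] hk; rewrite mulmx_suml; apply: big1 => j hj.
have hjk : (j < k)%N by rewrite -(prednK hk) ltnS.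
rewrite -mulmxA (G_hv _ (ordle j)) (bigD1 (Ordinal hjk)) //= subrr mul0r scale0r.
exact: mulmx0.
Qed.

Lemma diff_formula (X Y : 'rV[K]_(d.+1)) p q :
  X *m (a - p%:M) - Y *m (a - q%:M) = (X - Y) *m (a - p%:M) + (q - p) *: Y.
Proof.
have -> : a - q%:M = (a - p%:M) - (q - p)%:M by rewrite raddfB opprB addrA subrK.
by rewrite [Y *m _]mulmxBr mul_mx_scalar opprB addrA mulmxBl addrAC.
Qed.

Lemma diffS i : (u' i.+1 - u i.+1 <= SS b ths i)%MS.
Proof.
elim: i => [|i IH].
  rewrite [u' _]/= [u _]/= diff_formula subrr mul0mx add0r; apply: scalemx_sub.
  exact: submx_trans hu0 (G_SS b ths (leqnn 0) (leq0n d)).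
rewrite (_ : u' i.+2 - u i.+2 = (u' i.+1 - u i.+1) *m (a - (th' i.+1)%:M) + (th i.+1 - th' i.+1) *: u i.+1);
  last exact: diff_formula.
apply: addmx_sub.
  exact: submx_trans (submxMr _ IH) (SS_a_gen Hths HtriG i _).
exact: scalemx_sub (useq_SS Hth Hths HtriG hu0 i.+1).
Qed.

Lemma claimC i : u' i *m hv i = u i *m hv i.
Proof.
case: i => [|k]; first by [].
apply/eqP; rewrite -subr_eq0 -mulmxBl; apply/eqP; exact: (SS_hv (k := k.+1) (diffS k) isT).
Qed.


Lemma idem_fact i : (i <= d)%N ->
  G i = (\prod_(j < d.+1 | (j:nat) != i) (ths i - ths j)^-1) *:
        (\prod_(h < d - i) (b - (ths (d - h)%N)%:M) * \prod_(h < i) (b - (ths h)%:M)).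
Proof.
move=> hi; rewrite /prim_idem scaler_prod; congr (_ *: _).
have hf c : b - c%:M = horner_mx b ('X - c%:P).
  by rewrite rmorphB /= horner_mx_X horner_mx_C.
transitivity (horner_mx b (\prod_(j < d.+1 | (j:nat) != i) ('X - (ths j)%:P))).
  by rewrite rmorph_prod; apply: eq_bigr => j _; rewrite hf.
rewrite (prod_but (fun j => 'X - (ths j)%:P) hi) mulrC rmorphM !rmorph_prod.
by congr (_ * _); apply: eq_bigr => h _; rewrite hf.
Qed.

Lemma trace_G i : (i <= d)%N ->
  \tr (G i *m F 0%N) = (\prod_(j < d.+1 | (j:nat) != i) (ths i - ths j)^-1)
     * (\prod_(h < d - i) psi (d - h)%N) * (\prod_(1 <= h < i.+1) phi h) * (u0 *m x) 0 0.
Proof.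
move=> hi.
rewrite hx mulmxA mxtrace_mulC trace_mx11 mulmxA (idem_fact hi) -scalemxAr.
rewrite -mulmxE mulmxA (claimB (leq_subr i d)) (subKn hi) -scalemxAl -mulmxA M_hv.
rewrite -scalemxAl claimC (claimA hi hi) eqxx !mxE !mulrA.
by [].
Qed.

Lemma s_nz : (u0 *m x) 0 0 != 0.
Proof.
apply/negP => /eqP s0.
have ux0 : u0 *m x = 0 by rewrite (mx11_scalar (u0 *m x)) s0 raddf0.
have uF0 : u0 *m F 0%N = 0 by rewrite hx mulmxA ux0 mul0mx.
have sT : (u0 <= TT a th 1)%MS.
  rewrite -[u0]mulmx1 -(sumF Hth) mulmx_sumr; apply: summx_sub => j _.
  case: (posnP j) => hj.
    by rewrite hj uF0 sub0mx.
  exact: submx_trans (submxMl _ _) (F_TT a th hj (ordle j)).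
have sS : (u0 <= SS b ths 0)%MS := submx_trans hu0 (G_SS b ths (leqnn 0) (leq0n d)).
have sc : (u0 <= SS b ths 0 :&: TT a th 1)%MS by rewrite sub_capmx sS sT.
have := mxrankS sc; rewrite (cap0 Hth Hths HtriF HtriG HnzF 0) leqn0 mxrank_eq0.
by rewrite (negbTE nzu0).
Qed.

Lemma psi_nz k : (1 <= k <= d)%N -> psi k != 0.
Proof. exact: (phi_nz Hthr Hths HtriFr HtriG HnzFr hu0 nzu0 Hpsi). Qed.

Lemma psiprod_nz m n : (1 <= m)%N -> (n <= d.+1)%N -> \prod_(m <= h < n) psi h != 0.
Proof.
move=> hm hn; rewrite prodf_seq_neq0; apply/allP => h; rewrite mem_index_iota => /andP[h1 h2] /=.
apply: psi_nz; rewrite (leq_trans hm h1) /=; by rewrite -ltnS (leq_trans h2 hn).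
Qed.

Lemma dist_nz i : (i <= d)%N -> tau_s ths i (ths i) * eta_s d ths (d - i) (ths i) != 0.
Proof.
move=> hi; rewrite /tau_s /eta_s -(prod_but (fun j => ths i - ths j) hi).
apply/prodf_neq0 => j nj; rewrite subr_eq0; apply/eqP => E.
move/eqP: nj; apply; symmetry; apply: (th_inj Hths) => //; exact: ordle.
Qed.

Theorem row_main i : (i <= d)%N ->
  (\tr (G 0%N *m F 0%N))^-1 * \tr (G i *m F 0%N)
  = (\prod_(1 <= h < i.+1) phi h) / (\prod_(1 <= h < i.+1) psi h)
    * (eta_s d ths d (ths 0%N) / (tau_s ths i (ths i) * eta_s d ths (d - i) (ths i))).
Proof.
move=> hi; rewrite (trace_G hi) (trace_G (leq0n d)).
have E1 : \prod_(j < d.+1 | (j:nat) != i) (ths i - ths j)^-1 =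
   (tau_s ths i (ths i) * eta_s d ths (d - i) (ths i))^-1.
  by rewrite prodfV /tau_s /eta_s (prod_but (fun j => ths i - ths j) hi).
have E0 : \prod_(j < d.+1 | (j:nat) != 0%N) (ths 0%N - ths j)^-1 = (eta_s d ths d (ths 0%N))^-1.
  by rewrite prodfV (prod_but (fun j => ths 0%N - ths j) (leq0n d)) big_ord0 mul1r subn0.
have E2 : \prod_(h < d - 0) psi (d - h)%N =
   (\prod_(1 <= h < i.+1) psi h) * \prod_(h < d - i) psi (d - h)%N.
  rewrite !rev_lemma // -(@big_cat_nat _ _ _ i.+1) //.
have Q0 : \prod_(1 <= h < 1) phi h = 1 by rewrite big_geq.
rewrite E1 E0 E2 Q0.
have n1 := dist_nz hi.
have n2 : eta_s d ths d (ths 0%N) != 0.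
  by have := dist_nz (leq0n d); rewrite /tau_s big_ord0 mul1r subn0.
have n3 : \prod_(1 <= h < i.+1) psi h != 0 by apply: psiprod_nz.
have n4 : \prod_(h < d - i) psi (d - h)%N != 0.
  by rewrite rev_lemma //; apply: psiprod_nz.
have n5 := s_nz.
field.
by move: n1; rewrite mulf_eq0 negb_or => /andP[-> ->]; rewrite n2 n3 n4 n5.
Qed.

End Final.


Lemma nat_far (d i j : nat) : (i <= d)%N -> (j <= d)%N -> ((j.+1 < i)%N || (i.+1 < j)%N) ->
  (((d - j).+1 < d - i)%N || ((d - i).+1 < d - j)%N).
Proof. move=> h1 h2 /orP [h|h]; apply/orP; [right|left]; lia. Qed.

Lemma nat_adj (d i j : nat) : (i <= d)%N -> (j <= d)%N -> ((j.+1 == i) || (i.+1 == j)) ->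
  (((d - j).+1 == (d - i)%N) || ((d - i).+1 == (d - j)%N)).
Proof. move=> h1 h2 /orP [/eqP h|/eqP h]; apply/orP; [right|left]; apply/eqP; lia. Qed.

Lemma tr3 (K : fieldType) n (X Y Z : 'M[K]_n) : X^T *m Y^T *m Z^T = (Z *m Y *m X)^T.
Proof. by rewrite !trmx_mul mulmxA. Qed.

Theorem theorem23p8 (K : fieldType) (d : nat) (A As : 'M[K]_(d.+1))
    (th ths phi psi : nat -> K) :
  leonard_system A As th ths ->
  first_split_seq A As th ths phi ->
  first_split_seq A As (rev_seq d th) ths psi ->
  forall i : nat, (i <= d)%N ->
    (\tr (prim_idem A th 0 *m prim_idem As ths 0))^-1
      * \tr (prim_idem As ths i *m prim_idem A th 0)
    = (\prod_(1 <= h < i.+1) phi h) / (\prod_(1 <= h < i.+1) psi h)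
      * (eta_s d ths d (ths 0%N)
         / (tau_s ths i (ths i) * eta_s d ths (d - i) (ths i))).
Proof.
move=> [[HA HAs] tri1 nz1 tri2 nz2] Hphi0 Hpsi0 i hi.
have Hth := eig_tr HA; have Hths := eig_tr HAs.
have HtriF : forall i j, (i <= d)%N -> (j <= d)%N -> ((j.+1 < i)%N || (i.+1 < j)%N) ->
    prim_idem A^T th i *m As^T *m prim_idem A^T th j = 0.
  move=> i' j hi' hj h; rewrite -!trmx_idem tr3 tri1 ?trmx0 //; by rewrite orbC.
have HnzF : forall i j, (i <= d)%N -> (j <= d)%N -> ((j.+1 == i) || (i.+1 == j)) ->
    prim_idem A^T th i *m As^T *m prim_idem A^T th j != 0.
  move=> i' j hi' hj h; rewrite -!trmx_idem tr3 trmx_eq0 nz1 //; by rewrite orbC.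
have HtriG : forall i j, (i <= d)%N -> (j <= d)%N -> ((j.+1 < i)%N || (i.+1 < j)%N) ->
    prim_idem As^T ths i *m A^T *m prim_idem As^T ths j = 0.
  move=> i' j hi' hj h; rewrite -!trmx_idem tr3 tri2 ?trmx0 //; by rewrite orbC.
have HtriFr : forall i j, (i <= d)%N -> (j <= d)%N -> ((j.+1 < i)%N || (i.+1 < j)%N) ->
    prim_idem A^T (rev_seq d th) i *m As^T *m prim_idem A^T (rev_seq d th) j = 0.
  move=> i' j hi' hj h; rewrite !rev_idem //; apply: HtriF; rewrite ?leq_subr //.
  exact: nat_far.
have HnzFr : forall i j, (i <= d)%N -> (j <= d)%N -> ((j.+1 == i) || (i.+1 == j)) ->
    prim_idem A^T (rev_seq d th) i *m As^T *m prim_idem A^T (rev_seq d th) j != 0.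
  move=> i' j hi' hj h; rewrite !rev_idem //; apply: HnzF; rewrite ?leq_subr //.
  exact: nat_adj.
have splitE : forall t k, split_U A As t ths k = UU A^T As^T t ths k.
  move=> t k; rewrite /split_U /UU /SS /TT; congr (_ :&: _)%MS; apply: eq_bigr => j _;
    exact: trmx_idem.
have trE : forall x y, ((A - x%:M) *m (As - y%:M))^T = (As^T - y%:M) *m (A^T - x%:M).
  by move=> x y; rewrite trmx_mul !linearB /= !tr_scalar_mx.
have Hphi : forall k, (1 <= k <= d)%N -> forall u : 'rV[K]_(d.+1), (u <= UU A^T As^T th ths k)%MS ->
    u *m (As^T - (ths k)%:M) *m (A^T - (th k.-1)%:M) = phi k *: u.
  move=> k hk u hu; rewrite -mulmxA -trE; apply: Hphi0 => //; by rewrite splitE.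
have Hpsi : forall k, (1 <= k <= d)%N -> forall u : 'rV[K]_(d.+1),
    (u <= UU A^T As^T (rev_seq d th) ths k)%MS ->
    u *m (As^T - (ths k)%:M) *m (A^T - (rev_seq d th k.-1)%:M) = psi k *: u.
  move=> k hk u hu; rewrite -mulmxA -trE; apply: Hpsi0 => //; by rewrite splitE.
have [u0 hu0 nzu0] := rowV0Pn (F_neq0 Hths (leq0n d)).
have [x hx] := submxP (F0_sub Hth Hths HtriG HtriFr HnzFr hu0 nzu0).
have := row_main Hth Hths HtriF HtriG HnzF HtriFr HnzFr Hphi Hpsi hu0 nzu0 hx hi.
rewrite -!trmx_idem -!trmx_mul !mxtrace_tr.
by rewrite (mxtrace_mulC (prim_idem As ths i)).
Qed.
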